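(* Let $n\ge2$ and let $\varphi:\Delta_n^\circ\to\mathbb{R}$ be a regular exponentially concave function. The following are equivalent: (i) $L_\varphi$ is perturbation invariant: $L_\varphi(\mathbf{q}\oplus\mathbf{h}\,\|\,\mathbf{p}\oplus\mathbf{h})=L_\varphi(\mathbf{q}\,\|\,\mathbf{p})$ for all $\mathbf{p},\mathbf{q},\mathbf{h}\in\Delta_n^\circ$; (ii) there exist $\boldsymbol{\pi}\in\Delta_n^\circ$ and $c\in\mathbb{R}$ such that $\varphi(\mathbf{p})=-H^\times(\boldsymbol{\pi}\|\mathbf{p})+c=\sum_{i=1}^n\pi_i\log p_i+c$ for all $\mathbf{p}\in\Delta_n^\circ$.
   Context: $\Delta_n^\circ=\{\mathbf{x}\in(0,1]^n:\sum_ix_i=1\}$. Perturbation: $\mathbf{p}\oplus\mathbf{h}=(p_ih_i/\sum_jp_jh_j)_{i}$. Cross-entropy: $H^\times(\mathbf{p}\|\mathbf{q})=-\sum_ip_i\log q_i$. $\varphi$ is exponentially concave if $\Phi=e^\varphi$ is concave on $\Delta_n^\circ$; it is regular if moreover it is $C^4$ on $\Delta_n^\circ$ and $\frac{d^2}{dt^2}\big|_{t=0}\Phi(\mathbf{p}+t\mathbf{v})<0$ for every $\mathbf{p}\in\Delta_n^\circ$ and every nonzero $\mathbf{v}\in\mathbb{R}^n$ with $\sum_iv_i=0$. The logarithmic divergence is $L_\varphi(\mathbf{q}\|\mathbf{p})=\log\big(1+\nabla_{\mathbf{q}-\mathbf{p}}\varphi(\mathbf{p})\big)-(\varphi(\mathbf{q})-\varphi(\mathbf{p}))$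 for $\mathbf{p},\mathbf{q}\in\Delta_n^\circ$, where $\nabla_{\mathbf{v}}\varphi(\mathbf{p})=\frac{d}{dt}\varphi(\mathbf{p}+t\mathbf{v})|_{t=0}$. *)

(* Defs.v *)
From HB Require Import structures.
From mathcomp Require Import all_boot all_order all_algebra.
From mathcomp Require Import all_classical all_reals all_analysis.
Set Implicit Arguments. Unset Strict Implicit. Unset Printing Implicit Defensive.
Import Order.TTheory GRing.Theory Num.Theory.
Import numFieldNormedType.Exports.
Local Open Scope ring_scope.
Local Open Scope classical_set_scope.

Section Defs.
Variables (R : realType) (n : nat).
Notation vec := 'rV[R]_n.

Definition osimplex : set vec :=
  [set x | (forall i, 0 < x ord0 i <= 1) /\ \sum_(i < n) x ord0 i = 1].

Definition tangent : set vec := [set v | \sum_(i < n) v ord0 i = 0].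

Definition dirder (f : vec -> R) (v : vec) (p : vec) : R := 'D_v f p.

(* C^k on the open simplex, via iterated directional derivatives along
   tangent directions (equivalent to the usual C^k on the relatively open
   set Delta_n^o of the affine hyperplane). *)
Fixpoint Ck_simplex (k : nat) (f : vec -> R) : Prop :=
  match k with
  | 0 => {within osimplex, continuous f}
  | k'.+1 => {within osimplex, continuous f} /\
      (forall p v, osimplex p -> tangent v -> derivable f p v) /\
      (forall v, tangent v -> Ck_simplex k' (dirder f v))
  end.

Definition exp_concave (phi : vec -> R) : Prop :=
  forall p q t, osimplex p -> osimplex q -> 0 <= t <= 1 ->
    (1 - t) * expR (phi p) + t * expR (phi q)
      <= expR (phi ((1 - t) *: p + t *: q)).

Definition regular_exp_concave (phi : vec -> R) : Prop :=
  exp_concave phi /\ Ck_simplex 4 phi /\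
  (forall p v, osimplex p -> tangent v -> v != 0 ->
     (fun t : R => expR (phi (p + t *: v)))^`(2) 0 < 0).

Definition logdiv (phi : vec -> R) (q p : vec) : R :=
  ln (1 + dirder phi (q - p) p) - (phi q - phi p).

Definition perturb (p h : vec) : vec :=
  \row_(i < n) (p ord0 i * h ord0 i / \sum_(j < n) p ord0 j * h ord0 j).

Definition cross_entropy (p q : vec) : R :=
  - \sum_(i < n) p ord0 i * ln (q ord0 i).

End Defs.

(* Main.v *)
Require Import Defs.
From HB Require Import structures.
From mathcomp Require Import all_boot all_order all_algebra.
From mathcomp Require Import all_classical all_reals all_analysis.
From mathcomp Require Import ring lra.
Import Order.TTheory GRing.Theory Num.Theory.
Import numFieldNormedType.Exports.
Local Open Scope ring_scope.

Set Implicit Arguments. Unset Strict Implicit. Unset Printing Implicit Defensive.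
Local Open Scope classical_set_scope.


Section OneD.
Variable R : realType.

Lemma quot_cvg (g : R -> R) : derivable g 0 1 ->
  (fun s => (g s - g 0) / s) @ 0^' --> 'D_1 g 0.
Proof.
move=> dg.
have -> : (fun s => (g s - g 0) / s) =
  (fun h => h^-1 *: ((g \o shift 0) (h *: 1) - g 0)).
  by apply/funext => h /=; rewrite [_ *: 1]mulr1 addr0 mulrC.
exact: dg.
Qed.

Lemma exp_bound (y : R) : expR y - 1 <= y * expR y.
Proof.
have := expR_ge1Dx (- y); rewrite expRN => H.
have ey := expR_gt0 y.
rewrite -subr_ge0.
have : 0 <= (expR y)^-1 - (1 - y) by rewrite subr_ge0.
move=> h; have := mulr_ge0 h (ltW ey).
by rewrite mulrBl mulVf ?gt_eqF // mulrBl mul1r; lra.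
Qed.

Lemma lim_ineq (g : R -> R) (a : R) : derivable g 0 1 ->
  (\forall s \near 0^'+, a <= (g s - g 0) / s * expR (g s - g 0)) ->
  a <= 'D_1 g 0.
Proof.
move=> dg H.
have Q := quot_cvg dg.
have Qr := cvg_dnbhs_at_right Q.
set D := 'D_1 g 0.
have S : (fun s : R => s) @ 0^'+ --> (0:R).
  by apply: cvg_at_right_filter; exact: cvg_id.
have P : (fun s => (g s - g 0) / s * s) @ 0^'+ --> D * 0 by apply: cvgM.
have E : (fun s => expR ((g s - g 0) / s * s)) @ 0^'+ --> expR (D * 0).
  by apply: continuous_cvg => //; exact: continuous_expR.
have M : (fun s => (g s - g 0) / s * expR ((g s - g 0) / s * s)) @ 0^'+ --> D * expR (D * 0).
  by apply: cvgM.
rewrite mulr0 expR0 mulr1 in M.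
apply: (cvgr_to_ge M).
near=> s.
have s0 : s != 0 by near: s; exact: nbhs_right_neq.
rewrite /= divfK //.
by near: s.
Unshelve. all: by end_near. Qed.

Lemma lim_ineq2 (g h : R -> R) (A : R) : derivable g 0 1 ->
  h @ 0^'+ --> A ->
  (\forall s \near 0^'+, h s <= (g s - g 0) / s * expR (g s - g 0)) ->
  A <= 'D_1 g 0.
Proof.
move=> dg hA H.
have Q := quot_cvg dg.
have Qr := cvg_dnbhs_at_right Q.
set D := 'D_1 g 0.
have S : (fun s : R => s) @ 0^'+ --> (0:R).
  by apply: cvg_at_right_filter; exact: cvg_id.
have P : (fun s => (g s - g 0) / s * s) @ 0^'+ --> D * 0 by apply: cvgM.
have E : (fun s => expR ((g s - g 0) / s * s)) @ 0^'+ --> expR (D * 0).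
  by apply: continuous_cvg => //; exact: continuous_expR.
have M : (fun s => (g s - g 0) / s * expR ((g s - g 0) / s * s) - h s) @ 0^'+ --> D * expR (D * 0) - A.
  by apply: cvgB => //; apply: cvgM.
rewrite mulr0 expR0 mulr1 in M.
rewrite -subr_ge0; apply: (cvgr_to_ge M).
near=> s.
have s0 : s != 0 by near: s; exact: nbhs_right_neq.
rewrite /= divfK // subr_ge0.
by near: s.
Unshelve. all: by end_near. Qed.


Lemma aff_is_derive (a b t : R) : is_derive t (1:R) (fun s : R => a + b * s) b.
Proof.
have H1 := @is_derive_cst R R R a t 1.
have H2 := @is_deriveZ _ _ _ id b t (1:R) (1:R) (is_derive_id _ _).
have := is_deriveD H1 H2.
by rewrite add0r [_ *: 1]mulr1.
Qed.

Lemma aff_d2 (G : R -> R) (a b : R) :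
  (\forall t \near (0:R), G t = a + b * t) -> G^`(2) 0 = 0.
Proof.
move=> H.
have H2 := TopologicalNumDomainType.nbhs_nbhs H.
have D1 : \forall t \near (0:R), G^`() t = b.
  apply: filterS H2 => t Ht.
  rewrite derive1E (near_eq_derive _ Ht).
  by have [_ ->] := aff_is_derive a b t.
rewrite derive1nS derive1n1 derive1E (near_eq_derive _ D1).
exact: derive_cst.
Qed.

End OneD.

Section Simplex.
Variables (R : realType) (n : nat).
Notation vec := 'rV[R]_n.

Lemma pos_osimplex (x : vec) : (forall i, 0 < x ord0 i) ->
  \sum_(i < n) x ord0 i = 1 -> osimplex x.
Proof.
move=> hp hs; split=> // i; rewrite hp /= -hs (bigD1 i) //= lerDl.
by apply: sumr_ge0 => j _; exact: ltW.
Qed.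

Lemma osimplex_pos (x : vec) : osimplex x -> forall i, 0 < x ord0 i.
Proof. by case=> h _ i; case/andP: (h i). Qed.

Lemma osimplex_sum (x : vec) : osimplex x -> \sum_(i < n) x ord0 i = 1.
Proof. by case. Qed.

Lemma sum_line (x v : vec) t :
  \sum_(i < n) (x + t *: v) ord0 i = \sum_(i < n) x ord0 i + t * \sum_(i < n) v ord0 i.
Proof.
under eq_bigr do rewrite !mxE.
by rewrite big_split /= mulr_sumr.
Qed.

Lemma tangent_diff (x y : vec) : osimplex x -> osimplex y -> tangent (y - x).
Proof.
move=> hx hy; rewrite /tangent /=.
under eq_bigr do rewrite !mxE.
by rewrite sumrB (osimplex_sum hx) (osimplex_sum hy) subrr.
Qed.

Lemma osimplex_seg (x y : vec) t : osimplex x -> osimplex y -> 0 <= t <= 1 ->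
  osimplex (x + t *: (y - x)).
Proof.
move=> hx hy /andP[t0 t1]; apply: pos_osimplex.
  move=> i; rewrite !mxE.
  have := osimplex_pos hx i; have := osimplex_pos hy i; nra.
by rewrite sum_line (osimplex_sum hx) (tangent_diff hx hy) mulr0 addr0.
Qed.

Lemma near_osimplex (p v : vec) : osimplex p -> tangent v ->
  \forall t \near (0:R), osimplex (p + t *: v).
Proof.
move=> hp hv.
have H : \forall t \near (0:R), forall i, 0 < (p + t *: v) ord0 i.
  apply: (@filter_forall _ _ _ (nbhs (0:R)) _) => i.
  set e := p ord0 i / (`|v ord0 i| + 1).
  have pi := osimplex_pos hp i.
  have e0 : 0 < e by rewrite divr_gt0 // ltr_wpDl.
  have ee : e * (`|v ord0 i| + 1) = p ord0 i by rewrite /e divfK // gt_eqF // ltr_wpDl.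
  near=> t.
  have te : `|t| < e by near: t; exact: (@nbhs0_lt R R^o e e0).
  rewrite !mxE.
  have h1 := ler_norm t; have h2 := ler_normr t; have h3 := ler_norm (v ord0 i).
  have h4 : - v ord0 i <= `|v ord0 i| by rewrite -normrN ler_norm.
  have h5 : - t <= `|t| by rewrite -normrN ler_norm.
  have h6 := normr_ge0 t; have h7 := normr_ge0 (v ord0 i).
  nra.
apply: filterS H => t H; apply: pos_osimplex => //.
by rewrite sum_line (osimplex_sum hp) hv mulr0 addr0.
Unshelve. all: by end_near. Qed.

End Simplex.

Section Line.
Variables (R : realType) (n : nat).
Notation vec := 'rV[R]_n.

Lemma line_fun (f : vec -> R) (p v : vec) (s : R) :
  (fun h : R => h^-1 *: ((f \o shift (p + s *: v)) (h *: v) - f (p + s *: v))) =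
  (fun h : R => h^-1 *: (((fun t : R => f (p + t *: v)) \o shift s) (h *: 1) - f (p + s *: v))).
Proof.
apply/funext => h /=; congr (_ *: (f _ - _)).
by rewrite [_ *: 1]mulr1 scalerDl addrCA addrC.
Qed.

Lemma D_line (f : vec -> R) (p v : vec) (s : R) :
  'D_v f (p + s *: v) = 'D_1 (fun t : R => f (p + t *: v)) s.
Proof. by rewrite /derive line_fun. Qed.

Lemma derivable_line (f : vec -> R) (p v : vec) (s : R) :
  derivable f (p + s *: v) v <-> derivable (fun t : R => f (p + t *: v)) s 1.
Proof. by rewrite /derivable line_fun. Qed.

Lemma D_line0 (f : vec -> R) (p v : vec) :
  'D_v f p = 'D_1 (fun t : R => f (p + t *: v)) 0.
Proof. by rewrite -D_line scale0r addr0. Qed.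

Lemma derivable_line0 (f : vec -> R) (p v : vec) :
  derivable f p v <-> derivable (fun t : R => f (p + t *: v)) 0 1.
Proof. by rewrite -derivable_line scale0r addr0. Qed.

Lemma D_scale (f : vec -> R) (p v : vec) (c : R) : derivable f p v ->
  derivable f p (c *: v) /\ 'D_(c *: v) f p = c * 'D_v f p.
Proof.
move=> /derivable_line0 dg.
set g := (fun t : R => f (p + t *: v)) in dg.
have eq : (fun t : R => f (p + t *: (c *: v))) = g \o (fun t => c * t).
  by apply/funext => t /=; rewrite /g scalerA mulrC.
have Hi : is_derive (0:R) (1:R) (fun t : R => c * t) c.
  have H := @is_deriveZ _ _ _ id c (0:R) (1:R) (1:R) (is_derive_id _ _).
  by rewrite [_ *: 1]mulr1 in H.
have Hg : is_derive ((fun t : R => c * t) 0) (1:R) g ('D_1 g 0).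
  by rewrite mulr0; exact: derivableP.
have := is_derive1_comp Hg Hi; rewrite -eq => Hc.
split; first by apply/derivable_line0; case: Hc.
by rewrite D_line0 (D_line0 f p v) -/g; case: Hc => _ ->; rewrite mulrC.
Qed.

End Line.

Section Phi.
Variables (R : realType) (n : nat) (phi : 'rV[R]_n -> R).
Notation vec := 'rV[R]_n.
Hypothesis hcon : exp_concave phi.

Lemma conc_line (p q : vec) s : osimplex p -> osimplex q -> 0 <= s <= 1 ->
  (1 - s) * expR (phi p) + s * expR (phi q) <= expR (phi (p + s *: (q - p))).
Proof.
move=> hp hq hs.
suff -> : p + s *: (q - p) = (1 - s) *: p + s *: q by apply: hcon.
by apply/rowP => i; rewrite !mxE; ring.
Qed.

Lemma andP_intro (a b : bool) : a -> b -> a && b.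
Proof. by move=> -> ->. Qed.

Lemma TI (p q : vec) : osimplex p -> osimplex q -> derivable phi p (q - p) ->
  expR (phi q) <= expR (phi p) * (1 + 'D_(q - p) phi p).
Proof.
move=> hp hq /derivable_line0 dg.
rewrite D_line0.
set g := (fun t : R => phi (p + t *: (q - p))) in dg *.
have g0 : g 0 = phi p by rewrite /g scale0r addr0.
have g1 : g 1 = phi q by rewrite /g scale1r addrC subrK.
have L : expR (g 1 - g 0) - 1 <= 'D_1 g 0.
  apply: lim_ineq => //.
  near=> s.
  have s0 : 0 < s by near: s; exact: nbhs_right_gt.
  have s1 : s < 1 by near: s; exact: nbhs_right_lt.
  have c := @conc_line p q s hp hq (andP_intro (ltW s0) (ltW s1)).
  have ep := expR_gt0 (phi p).
  have E1 : expR (phi (p + s *: (q - p))) = expR (phi p) * expR (g s - g 0).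
    by rewrite -expRD g0 [phi p + _]addrC subrK.
  have E2 : expR (phi q) = expR (phi p) * expR (g 1 - g 0).
    by rewrite -expRD g0 g1 [phi p + _]addrC subrK.
  have B := exp_bound (g s - g 0).
  rewrite E1 E2 in c.
  rewrite mulrAC ler_pdivlMr //.
  set a := expR (g 1 - g 0) in c *; set b := expR (g s - g 0) in c B *.
  set y := g s - g 0 in B *.
  nra.
have ep := expR_gt0 (phi p).
have : expR (phi q) = expR (phi p) * expR (g 1 - g 0).
  by rewrite -expRD g0 g1 [phi p + _]addrC subrK.
move=> ->; rewrite ler_pM2l //; lra.
Unshelve. all: by end_near. Qed.

Lemma tangentD (v w : vec) : tangent v -> tangent w -> tangent (v + w).
Proof.
rewrite /tangent /= => hv hw; have := sum_line v w 1.
by rewrite scale1r hv hw mul1r addr0.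
Qed.

Lemma tangentZ (c : R) (v : vec) : tangent v -> tangent (c *: v).
Proof.
rewrite /tangent /= => hv; under eq_bigr do rewrite !mxE.
by rewrite -mulr_sumr hv mulr0.
Qed.

Lemma tangent0 : tangent (0 : vec).
Proof. by rewrite /tangent /=; under eq_bigr do rewrite !mxE; rewrite big1. Qed.

Lemma near_right (P : R -> Prop) : (\forall t \near (0:R), P t) -> \forall t \near (0:R)^'+, P t.
Proof. by move=> H; rewrite near_withinE; apply: filterS H => x H _. Qed.

Lemma gline0 (p v : vec) : phi (p + 0 *: v) = phi p.
Proof. by rewrite scale0r addr0. Qed.

Hypothesis hder : forall p v, osimplex p -> tangent v -> derivable phi p v.

Lemma superadd (p v w : vec) : osimplex p -> tangent v -> tangent w ->
  'D_v phi p + 'D_w phi p <= 'D_(v + w) phi p.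
Proof.
move=> hp hv hw.
have hvw := tangentD hv hw.
have [_ Du] := D_scale (2^-1) (hder hp hvw).
set u := 2^-1 *: (v + w) in Du.
have hu : tangent u by exact: tangentZ.
suff : 2^-1 * ('D_v phi p + 'D_w phi p) <= 'D_u phi p.
  rewrite Du; lra.
have dv := hder hp hv; have dw := hder hp hw; have du := hder hp hu.
rewrite (D_line0 phi p v) (D_line0 phi p w) (D_line0 phi p u).
move: dv dw du; rewrite !derivable_line0.
set gv := (fun t : R => phi (p + t *: v)).
set gw := (fun t : R => phi (p + t *: w)).
set gu := (fun t : R => phi (p + t *: u)) => dv dw du.
apply: (@lim_ineq2 _ gu (fun s => 2^-1 * ((gv s - gv 0) / s + (gw s - gw 0) / s))) => //.
  apply: cvgM; first exact: cvg_cst.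
  by apply: cvgD; apply: cvg_dnbhs_at_right; apply: quot_cvg.
near=> s.
have s0 : 0 < s by near: s; exact: nbhs_right_gt.
have pv : osimplex (p + s *: v) by near: s; apply: near_right; exact: near_osimplex.
have pw : osimplex (p + s *: w) by near: s; apply: near_right; exact: near_osimplex.
have h2 : (0:R) <= (2^-1 : R) <= 1 by apply/andP; split; lra.
have c := hcon pv pw h2.
have eqv : (1 - 2^-1) *: (p + s *: v) + 2^-1 *: (p + s *: w) = p + s *: u.
  by apply/rowP => i; rewrite !mxE; field.
rewrite eqv in c.
have Ev : expR (phi (p + s *: v)) = expR (phi p) * expR (gv s - gv 0).
  by rewrite -expRD /gv gline0 [phi p + _]addrC subrK.
have Ew : expR (phi (p + s *: w)) = expR (phi p) * expR (gw s - gw 0).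
  by rewrite -expRD /gw gline0 [phi p + _]addrC subrK.
have Eu : expR (phi (p + s *: u)) = expR (phi p) * expR (gu s - gu 0).
  by rewrite -expRD /gu gline0 [phi p + _]addrC subrK.
rewrite Ev Ew Eu in c.
have B := exp_bound (gu s - gu 0).
have Bv := expR_ge1Dx (gv s - gv 0).
have Bw := expR_ge1Dx (gw s - gw 0).
have ep := expR_gt0 (phi p).
move: c B Bv Bw ep.
set Yv := gv s - gv 0; set Yw := gw s - gw 0; set Yu := gu s - gu 0.
set P0 := expR (phi p) => c B Bv Bw ep.
have e1 : 2^-1 * (Yv / s + Yw / s) = (2^-1 * (Yv + Yw)) / s by ring.
have e2 : Yu / s * expR Yu = Yu * expR Yu / s by ring.
rewrite e1 e2 ler_pM2r ?invr_gt0 //.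
nra.
Unshelve. all: by end_near. Qed.

Lemma D_neg (p v : vec) : osimplex p -> tangent v -> 'D_(- v) phi p = - 'D_v phi p.
Proof.
move=> hp hv; have [_ H] := D_scale (-1) (hder hp hv).
by rewrite scaleN1r in H; rewrite H mulN1r.
Qed.

Lemma D_add (p v w : vec) : osimplex p -> tangent v -> tangent w ->
  'D_(v + w) phi p = 'D_v phi p + 'D_w phi p.
Proof.
move=> hp hv hw.
have h1 := superadd hp hv hw.
have hv' : tangent (- v) by rewrite -scaleN1r; exact: tangentZ.
have hw' : tangent (- w) by rewrite -scaleN1r; exact: tangentZ.
have h2 := superadd hp hv' hw'.
rewrite -opprD !D_neg // in h2; last exact: tangentD.
apply/eqP; rewrite eq_le h1 andbT; lra.
Qed.

Lemma D_sum (p : vec) k (u : 'I_k -> vec) (c : 'I_k -> R) : osimplex p ->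
  (forall i, tangent (u i)) ->
  'D_(\sum_(i < k) c i *: u i) phi p = \sum_(i < k) c i * 'D_(u i) phi p.
Proof.
move=> hp hu.
suff [] : tangent (\sum_(i < k) c i *: u i) /\
  'D_(\sum_(i < k) c i *: u i) phi p = \sum_(i < k) c i * 'D_(u i) phi p by [].
apply: (big_ind2 (fun v d => tangent v /\ 'D_v phi p = d)).
- by split; [exact: tangent0 | exact: derive0].
- move=> x1 x2 y1 y2 [t1 e1] [t2 e2]; split; first exact: tangentD.
  by rewrite D_add // e1 e2.
- move=> i _; split; first exact: tangentZ.
  by have [_ ->] := D_scale (c i) (hder hp (hu i)).
Qed.

End Phi.


Section Pert.
Variables (R : realType) (n : nat).
Notation vec := 'rV[R]_n.
Hypothesis n0 : (0 < n)%N.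
Let i0 : 'I_n := Ordinal n0.

Lemma mxBE (a b : vec) i : (a - b) ord0 i = a ord0 i - b ord0 i.
Proof. by rewrite !mxE. Qed.
Lemma mxDE (a b : vec) i : (a + b) ord0 i = a ord0 i + b ord0 i.
Proof. by rewrite !mxE. Qed.
Lemma mxNE (a : vec) i : (- a) ord0 i = - a ord0 i.
Proof. by rewrite !mxE. Qed.
Lemma mxZE c (a : vec) i : (c *: a) ord0 i = c * a ord0 i.
Proof. by rewrite !mxE. Qed.

Definition dot (x h : vec) := \sum_(j < n) x ord0 j * h ord0 j.

Lemma perturbE (x h : vec) i : perturb x h ord0 i = x ord0 i * h ord0 i / dot x h.
Proof. by rewrite /perturb mxE. Qed.

Lemma dot_gt0 (x h : vec) : osimplex x -> (forall i, 0 < h ord0 i) -> 0 < dot x h.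
Proof.
move=> hx hh; rewrite /dot (bigD1 i0) //=.
apply: ltr_wpDr; first by apply: sumr_ge0 => j _; apply: mulr_ge0; apply: ltW;
  [exact: osimplex_pos | exact: hh].
by apply: mulr_gt0; [exact: osimplex_pos | exact: hh].
Qed.

Lemma perturb_osimplex (x h : vec) : osimplex x -> (forall i, 0 < h ord0 i) ->
  osimplex (perturb x h).
Proof.
move=> hx hh; have d0 := dot_gt0 hx hh.
apply: pos_osimplex => [i|].
  by rewrite perturbE divr_gt0 // mulr_gt0 //; exact: osimplex_pos.
under eq_bigr do rewrite perturbE.
by rewrite -mulr_suml divff // gt_eqF.
Qed.

Lemma dot_line (x y h : vec) s : dot (x + s *: (y - x)) h = dot x h + s * (dot y h - dot x h).
Proof.
rewrite /dot -sumrB mulr_sumr -big_split /=; apply: eq_bigr => i _; rewrite !mxE; ring.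
Qed.

Lemma pert_line (x y h : vec) s : osimplex x -> osimplex y -> (forall i, 0 < h ord0 i) ->
  dot (x + s *: (y - x)) h != 0 ->
  perturb (x + s *: (y - x)) h - perturb x h =
  (s * dot y h / dot (x + s *: (y - x)) h) *: (perturb y h - perturb x h).
Proof.
move=> hx hy hh dz.
have dx := dot_gt0 hx hh; have dy := dot_gt0 hy hh.
move: dz; rewrite dot_line => dz.
apply/rowP => i; rewrite mxBE mxZE mxBE !perturbE dot_line !(mxDE, mxZE, mxBE, mxNE).
move: dz; set X := dot x h; set Y := dot y h => dz.
have X0 : X != 0 by rewrite gt_eqF.
have Y0 : Y != 0 by rewrite gt_eqF.
field.
by rewrite dz X0 Y0.
Qed.

End Pert.

Section Main1.
Variables (R : realType) (n : nat) (phi : 'rV[R]_n -> R).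
Notation vec := 'rV[R]_n.
Hypothesis hcon : exp_concave phi.
Hypothesis hder : forall p v, osimplex p -> tangent v -> derivable phi p v.

Definition Kf (x y : vec) := expR (phi x) * (1 + 'D_(y - x) phi x).

Lemma Kf_ge (x y : vec) : osimplex x -> osimplex y -> expR (phi y) <= Kf x y.
Proof. move=> hx hy; apply: TI => //; apply: hder => //; exact: tangent_diff. Qed.

Lemma Kf_gt0 (x y : vec) : osimplex x -> osimplex y -> 0 < Kf x y.
Proof. by move=> hx hy; apply: lt_le_trans (Kf_ge hx hy); exact: expR_gt0. Qed.

Lemma Kf_D_gt0 (x y : vec) : osimplex x -> osimplex y -> 0 < 1 + 'D_(y - x) phi x.
Proof.
move=> hx hy; have := Kf_gt0 hx hy; rewrite /Kf.
by rewrite pmulr_rgt0 // expR_gt0.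
Qed.

Lemma exp_logdiv (x y : vec) : osimplex x -> osimplex y ->
  expR (logdiv phi y x) = Kf x y / expR (phi y).
Proof.
move=> hx hy; have D0 := Kf_D_gt0 hx hy.
rewrite /logdiv /dirder /Kf expRD lnK; last by rewrite posrE.
rewrite opprB expRD expRN; ring.
Qed.

Lemma KL (b z w : vec) (lam : R) : osimplex b -> tangent w -> z - b = lam *: w ->
  Kf b z = expR (phi b) * (1 + lam * 'D_w phi b).
Proof.
move=> hb hw e; rewrite /Kf e.
by have [_ ->] := D_scale lam (hder hb hw).
Qed.

End Main1.

Section Alg.
Variable R : realType.

Lemma alg (a0 a1 b0 b1 c0 c1 d0 d1 m0 mh m1 : R) :
  0 < a0 + a1 ->
  c0 = a0 * m0 -> d0 = b0 * m0 ->
  c0 + c1 / 2 = (a0 + a1 / 2) * mh -> d0 + d1 / 2 = (b0 + b1 / 2) * mh ->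
  c0 + c1 = (a0 + a1) * m1 -> d0 + d1 = (b0 + b1) * m1 ->
  a0 * b1 != a1 * b0 -> m0 = m1.
Proof.
move=> pa h0 h0' h1 h1' h2 h2' det.
have E1 : (c0 + c1 / 2) * (b0 + b1 / 2) = (d0 + d1 / 2) * (a0 + a1 / 2).
  by rewrite h1 h1'; ring.
have E2 : (c0 + c1) * (b0 + b1) = (d0 + d1) * (a0 + a1).
  by rewrite h2 h2'; ring.
rewrite h0 h0' in E1 E2.
set g := c1 - m0 * a1; set d := d1 - m0 * b1.
set e1 := g * b0 - d * a0; set e2 := g * b1 - d * a1.
have F2 : e1 + e2 = 0.
  have : (a0 * m0 + c1) * (b0 + b1) - (b0 * m0 + d1) * (a0 + a1) = 0 by rewrite E2 subrr.
  by move=> <-; rewrite /e1 /e2 /g /d; ring.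
have F1 : e1 / 2 + e2 / 4 = 0.
  have : (a0 * m0 + c1 / 2) * (b0 + b1 / 2) - (b0 * m0 + d1 / 2) * (a0 + a1 / 2) = 0.
    by rewrite E1 subrr.
  by move=> <-; rewrite /e1 /e2 /g /d; field.
have e10 : e1 = 0 by lra.
have e20 : e2 = 0 by lra.
have G : g * (a0 * b1 - a1 * b0) = a0 * e2 - a1 * e1 by rewrite /e1 /e2 /d; ring.
rewrite e10 e20 !mulr0 subrr in G.
have g0 : g = 0.
  move/eqP: G; rewrite mulf_eq0 => /orP[/eqP //|].
  by rewrite subr_eq0 (negbTE det).
have : (a0 + a1) * m1 = (a0 + a1) * m0.
  by rewrite -h2 h0; move: g0; rewrite /g => /eqP; rewrite subr_eq0 => /eqP ->; ring.
by move/(mulfI (lt0r_neq0 pa)).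
Qed.

End Alg.

Section Main2.
Variables (R : realType) (n : nat) (phi : 'rV[R]_n -> R).
Notation vec := 'rV[R]_n.
Hypothesis n0 : (0 < n)%N.
Hypothesis hcon : exp_concave phi.
Hypothesis hder : forall p v, osimplex p -> tangent v -> derivable phi p v.
Hypothesis hinv : forall p q h : vec, osimplex p -> osimplex q -> osimplex h ->
      logdiv phi (perturb q h) (perturb p h) = logdiv phi q p.

Notation P z := (expR (phi z)).

Lemma invK (x y h : vec) : osimplex x -> osimplex y -> osimplex h ->
  Kf phi (perturb x h) (perturb y h) / P (perturb y h) = Kf phi x y / P y.
Proof.
move=> hx hy hh; have hp := osimplex_pos hh.
rewrite -!exp_logdiv //; try exact: perturb_osimplex.
by rewrite hinv.
Qed.

Definition Mf (h y : vec) := P (perturb y h) * dot y h / P y.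

Lemma LA (x y h : vec) (t : R) : osimplex x -> osimplex y -> osimplex h -> 0 <= t <= 1 ->
  P (perturb x h) * (dot (x + t *: (y - x)) h + t * dot y h *
     'D_(perturb y h - perturb x h) phi (perturb x h))
  = P x * (1 + t * 'D_(y - x) phi x) * Mf h (x + t *: (y - x)).
Proof.
move=> hx hy hh ht.
set l := x + t *: (y - x).
have hl : osimplex l by exact: osimplex_seg.
have hp := osimplex_pos hh.
have dl := dot_gt0 n0 hl hp.
have hxh := perturb_osimplex n0 hx hp.
have hyh := perturb_osimplex n0 hy hp.
have hlh := perturb_osimplex n0 hl hp.
have K1 : Kf phi x l = P x * (1 + t * 'D_(y - x) phi x).
  apply: KL => //; first exact: tangent_diff.
  by rewrite /l addrAC subrr add0r.
have K2 : Kf phi (perturb x h) (perturb l h) =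
   P (perturb x h) * (1 + (t * dot y h / dot l h) * 'D_(perturb y h - perturb x h) phi (perturb x h)).
  apply: KL => //; first exact: tangent_diff.
  by apply: pert_line => //; rewrite gt_eqF.
have I := invK hx hl hh.
rewrite -K1 /Mf -/l.
have PL0 := expR_gt0 (phi l); have PLh0 := expR_gt0 (phi (perturb l h)).
have I' : Kf phi x l = Kf phi (perturb x h) (perturb l h) * P l / P (perturb l h).
  have I2 : Kf phi (perturb x h) (perturb l h) = Kf phi x l / P l * P (perturb l h).
    by rewrite -I; field; rewrite gt_eqF.
  by rewrite I2; field; rewrite !gt_eqF.
rewrite I' K2; field.
by rewrite !gt_eqF.
Qed.

Lemma LB (x y h : vec) (t : R) : osimplex x -> osimplex y -> osimplex h -> 0 <= t <= 1 ->
  P (perturb y h) * (dot (x + t *: (y - x)) h + (1 - t) * dot x h *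
     'D_(perturb x h - perturb y h) phi (perturb y h))
  = P y * (1 + (1 - t) * 'D_(x - y) phi y) * Mf h (x + t *: (y - x)).
Proof.
move=> hx hy hh ht.
have e : x + t *: (y - x) = y + (1 - t) *: (x - y).
  by apply/rowP => i; rewrite !mxE; ring.
rewrite e; apply: LA => //.
by move: ht => /andP[? ?]; apply/andP; split; lra.
Qed.

Hypothesis hreg : forall p v, osimplex p -> tangent v -> v != 0 ->
     (fun t : R => expR (phi (p + t *: v)))^`(2) 0 < 0.

Lemma degen (x y : vec) : osimplex x -> osimplex y -> x != y ->
  P x * (- (P y * 'D_(x - y) phi y)) = (P x * 'D_(y - x) phi x) * (P y * (1 + 'D_(x - y) phi y))
  -> False.
Proof.
move=> hx hy xy det.
set Dx := 'D_(y - x) phi x in det; set Dy := 'D_(x - y) phi y in det.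
have k1 : P y <= P x * (1 + Dx) by exact: Kf_ge.
have k2 : P x <= P y * (1 + Dy) by exact: Kf_ge.
have px := expR_gt0 (phi x); have py := expR_gt0 (phi y).
have e1 : P y * (1 + Dy) = P x by nra.
have e2 : P y = P x + P x * Dx by nra.
have F : forall t, 0 <= t <= 1 -> P (x + t *: (y - x)) = P x + P x * Dx * t.
  move=> t ht; apply/eqP; rewrite eq_le; apply/andP; split.
    have := Kf_ge hcon hder hx (osimplex_seg hx hy ht).
    rewrite (@KL _ _ _ hder x _ (y - x) t) //; last by rewrite addrAC subrr add0r.
      rewrite -/Dx; lra.
    exact: tangent_diff.
  have := conc_line hcon hx hy ht; rewrite e2; lra.
set v := y - x.
have v0 : v != 0 by rewrite subr_eq0 eq_sym.
have hm : osimplex (x + 2^-1 *: v) by apply: osimplex_seg => //; apply/andP; split; lra.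
have := hreg hm (tangent_diff hx hy) v0.
rewrite (@aff_d2 _ _ (P x + P x * Dx / 2) (P x * Dx)) ?ltxx //.
near=> s.
have hs : `|s| < 2^-1 by near: s; apply: (@nbhs0_lt R R^o); lra.
have e : x + 2^-1 *: v + s *: v = x + (2^-1 + s) *: (y - x) by rewrite -addrA -scalerDl.
rewrite e F; first by ring.
move: hs; rewrite ltr_norml => /andP[? ?]; apply/andP; split; lra.
Unshelve. all: by end_near. Qed.

Lemma t01 (t : R) : (0 <= t <= 1) = true -> 0 <= t <= 1.
Proof. by []. Qed.

Lemma M_const (h x y : vec) : osimplex h -> osimplex x -> osimplex y -> Mf h x = Mf h y.
Proof.
move=> hh hx hy.
have [->|xy] := eqVneq x y; first by [].
have q0 : (0:R) <= (0:R) <= 1 by apply/andP; split; lra.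
have q1 : (0:R) <= (1:R) <= 1 by apply/andP; split; lra.
have qh : (0:R) <= (2^-1:R) <= 1 by apply/andP; split; lra.
have LA0 := @LA x y h 0 hx hy hh q0.
have LA1 := @LA x y h 1 hx hy hh q1.
have LAh := @LA x y h 2^-1 hx hy hh qh.
have LB0 := @LB x y h 0 hx hy hh q0.
have LB1 := @LB x y h 1 hx hy hh q1.
have LBh := @LB x y h 2^-1 hx hy hh qh.
have e0 : x + 0 *: (y - x) = x by rewrite scale0r addr0.
have e1 : x + 1 *: (y - x) = y by rewrite scale1r addrC subrK.
rewrite !dot_line in LA0 LA1 LAh LB0 LB1 LBh.
rewrite e0 in LA0 LB0; rewrite e1 in LA1 LB1.
move: LA0 LA1 LAh LB0 LB1 LBh.
set Dx := 'D_(y - x) phi x; set Dy := 'D_(x - y) phi y.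
set Dxh := 'D_(perturb y h - perturb x h) phi (perturb x h).
set Dyh := 'D_(perturb x h - perturb y h) phi (perturb y h).
set X := dot x h; set Y := dot y h.
set mh := Mf h (x + 2^-1 *: (y - x)).
move=> LA0 LA1 LAh LB0 LB1 LBh.
have [det|det] := eqVneq (P x * (- (P y * Dy))) ((P x * Dx) * (P y * (1 + Dy))).
  by case: (degen hx hy xy det).
have k1 : 0 < P x + P x * Dx.
  have := Kf_gt0 hcon hder hx hy; rewrite /Kf -/Dx; lra.
apply: (@alg _ (P x) (P x * Dx) (P y * (1 + Dy)) (- (P y * Dy))
   (P (perturb x h) * X) (P (perturb x h) * (Y - X + Y * Dxh))
   (P (perturb y h) * (X + X * Dyh)) (P (perturb y h) * (Y - X - X * Dyh))
   _ mh _ k1) => //.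
- by apply: (eq_trans _ (eq_trans LA0 _)); ring.
- by apply: (eq_trans _ (eq_trans LB0 _)); ring.
- by apply: (eq_trans _ (eq_trans LAh _)); field.
- by apply: (eq_trans _ (eq_trans LBh _)); field.
- by apply: (eq_trans _ (eq_trans LA1 _)); ring.
- by apply: (eq_trans _ (eq_trans LB1 _)); ring.
Qed.

End Main2.


Section LNS.
Variables (R : realType) (n : nat).
Notation vec := 'rV[R]_n.

Lemma ln_aff_derive (a v t0 : R) : 0 < a + t0 * v ->
  is_derive t0 (1:R) (fun t : R => ln (a + t * v)) ((a + t0 * v)^-1 * v).
Proof.
move=> h.
have H1 : is_derive t0 (1:R) (fun s : R => a + v * s) v by exact: aff_is_derive.
have H2 : is_derive ((fun s : R => a + v * s) t0) (1:R) (@ln R) (a + t0 * v)^-1.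
  by rewrite /= mulrC; exact: is_derive1_ln.
have := @is_derive1_comp R (@ln R) (fun s : R => a + v * s) t0 _ _ H2 H1.
have -> : (@ln R) \o (fun s : R => a + v * s) = (fun t : R => ln (a + t * v)).
  by apply/funext => t /=; rewrite mulrC.
by [].
Qed.

Lemma LNS (a v pi : vec) (t0 : R) : (forall i, 0 < a ord0 i + t0 * v ord0 i) ->
  is_derive t0 (1:R) (fun t : R => \sum_(i < n) pi ord0 i * ln (a ord0 i + t * v ord0 i))
    (\sum_(i < n) pi ord0 i * ((a ord0 i + t0 * v ord0 i)^-1 * v ord0 i)).
Proof.
move=> h.
have Hi : forall i : 'I_n, is_derive t0 (1:R) (fun t : R => pi ord0 i * ln (a ord0 i + t * v ord0 i))
   (pi ord0 i * ((a ord0 i + t0 * v ord0 i)^-1 * v ord0 i)).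
  move=> i.
  exact: (@is_deriveZ _ _ _ _ (pi ord0 i) t0 (1:R) _ (ln_aff_derive (h i))).
have H := @is_derive_sum R R R n (fun i t => pi ord0 i * ln (a ord0 i + t * v ord0 i)) t0 1
   (fun i => pi ord0 i * ((a ord0 i + t0 * v ord0 i)^-1 * v ord0 i)) Hi.
by rewrite fct_sumE in H.
Qed.

End LNS.

Section Main3.
Variables (R : realType) (n : nat) (phi : 'rV[R]_n -> R).
Notation vec := 'rV[R]_n.
Hypothesis n0 : (0 < n)%N.
Hypothesis hcon : exp_concave phi.
Hypothesis hder : forall p v, osimplex p -> tangent v -> derivable phi p v.
Hypothesis hinv : forall p q h : vec, osimplex p -> osimplex q -> osimplex h ->
      logdiv phi (perturb q h) (perturb p h) = logdiv phi q p.
Hypothesis hreg : forall p v, osimplex p -> tangent v -> v != 0 ->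
     (fun t : R => expR (phi (p + t *: v)))^`(2) 0 < 0.

Notation P z := (expR (phi z)).

Definition unif : vec := \row_(i < n) (n%:R)^-1.
Definition invp (p : vec) : vec := \row_(i < n) ((p ord0 i)^-1 / \sum_(j < n) (p ord0 j)^-1).
Definition uvec (i : 'I_n) : vec := delta_mx 0 i - unif.
Definition piv : vec := \row_(i < n) ((1 + 'D_(uvec i) phi unif) / n%:R).

Lemma n0R : (n%:R : R) != 0.
Proof. by rewrite pnatr_eq0 -lt0n. Qed.

Lemma sum_const_n (c : R) : \sum_(i < n) c = n%:R * c.
Proof. by rewrite sumr_const card_ord mulr_natl. Qed.

Lemma unif_osimplex : osimplex unif.
Proof.
apply: pos_osimplex => [i|]; first by rewrite mxE invr_gt0 ltr0n.
under eq_bigr do rewrite mxE.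
by rewrite sum_const_n divff // n0R.
Qed.

Lemma sum_inv_gt0 (p : vec) : osimplex p -> 0 < \sum_(j < n) (p ord0 j)^-1.
Proof.
move=> hp; rewrite (bigD1 (Ordinal n0)) //=; apply: ltr_wpDr.
  by apply: sumr_ge0 => j _; rewrite invr_ge0; apply: ltW; exact: osimplex_pos.
by rewrite invr_gt0; exact: osimplex_pos.
Qed.

Lemma invp_pos (p : vec) : osimplex p -> forall i, 0 < invp p ord0 i.
Proof.
move=> hp i; rewrite mxE divr_gt0 ?invr_gt0 //; first exact: osimplex_pos.
exact: sum_inv_gt0.
Qed.

Lemma invp_osimplex (p : vec) : osimplex p -> osimplex (invp p).
Proof.
move=> hp; apply: pos_osimplex; first exact: invp_pos.
under eq_bigr do rewrite mxE.
by rewrite -mulr_suml divff // gt_eqF // sum_inv_gt0.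
Qed.

Lemma dot_invp (p : vec) : osimplex p -> dot p (invp p) = n%:R / \sum_(j < n) (p ord0 j)^-1.
Proof.
move=> hp; rewrite /dot.
under eq_bigr => i _ do rewrite mxE mulrA divff ?mul1r ?gt_eqF ?(osimplex_pos hp i) //.
by rewrite sum_const_n.
Qed.

Lemma perturb_invp (p : vec) : osimplex p -> perturb p (invp p) = unif.
Proof.
move=> hp; apply/rowP => i; rewrite perturbE dot_invp // !mxE.
have s0 := sum_inv_gt0 hp; have pi0 := osimplex_pos hp i.
field.
by rewrite n0R !gt_eqF.
Qed.

Lemma tangent_uvec i : tangent (uvec i).
Proof.
rewrite /tangent /= /uvec; under eq_bigr do rewrite !mxE.
rewrite sumrB (bigD1 i) //= !eqxx /= big1 => [|j ji]; last by rewrite (negbTE ji) ?andbF.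
by rewrite addr0 sum_const_n divff ?subrr // n0R.
Qed.

Lemma decomp (z : vec) : \sum_(i < n) z ord0 i = 1 ->
  z - unif = \sum_(i < n) z ord0 i *: uvec i.
Proof.
move=> hz; apply/rowP => j; rewrite summxE !mxE.
under eq_bigr do rewrite !mxE.
under eq_bigr do rewrite mulrBr.
rewrite sumrB -mulr_suml hz mul1r (bigD1 j) //= !eqxx /= mulr1.
rewrite big1 ?addr0 // => i ij.
by rewrite eq_sym (negbTE ij) mulr0.
Qed.

Lemma Kf_unif (z : vec) : osimplex z ->
  Kf phi unif z = P unif * \sum_(i < n) z ord0 i * (1 + 'D_(uvec i) phi unif).
Proof.
move=> hz; rewrite /Kf decomp ?(osimplex_sum hz) //.
rewrite (D_sum hcon hder (fun i => z ord0 i) unif_osimplex); last exact: tangent_uvec.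
congr (_ * _).
rewrite [RHS](eq_bigr (fun i => z ord0 i + z ord0 i * 'D_(uvec i) phi unif)).
  by rewrite big_split /= (osimplex_sum hz).
by move=> i _; rewrite mulrDr mulr1.
Qed.

Lemma DER (p y : vec) : osimplex p -> osimplex y ->
  1 + 'D_(y - p) phi p = \sum_(i < n) piv ord0 i * y ord0 i / p ord0 i.
Proof.
move=> hp hy.
set h := invp p.
have hh : osimplex h by exact: invp_osimplex.
have hhp := osimplex_pos hh.
have hyh := perturb_osimplex n0 hy hhp.
have I := invK n0 hcon hder hinv hp hy hh.
have M := M_const n0 hcon hder hinv hreg hh hy hp.
rewrite /Mf perturb_invp // in M; rewrite perturb_invp // in I.
have Pp := expR_gt0 (phi p); have Py := expR_gt0 (phi y).
have Pu := expR_gt0 (phi unif); have Pyh := expR_gt0 (phi (perturb y h)).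
have dp := dot_gt0 n0 hp hhp; have dy := dot_gt0 n0 hy hhp.
have E1 : 1 + 'D_(y - p) phi p = Kf phi p y / P p by rewrite /Kf; field; rewrite gt_eqF.
have E2 : Kf phi p y = P y * Kf phi unif (perturb y h) / P (perturb y h).
  by rewrite -mulrA I; field; rewrite !gt_eqF.
have E3 : P (perturb y h) = P unif * dot p h * P y / (P p * dot y h).
  have : P (perturb y h) = P (perturb y h) * dot y h / P y * P y / dot y h.
    by field; rewrite !gt_eqF.
  by rewrite M => ->; field; rewrite !gt_eqF.
rewrite E1 E2 E3 Kf_unif //.
set S := \sum_(i < n) _.
have E4 : P y * (P unif * S) / (P unif * dot p h * P y / (P p * dot y h)) / P p =
   S * dot y h / dot p h by field; rewrite !gt_eqF.
rewrite E4 /S !mulr_suml; apply: eq_bigr => i _.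
rewrite perturbE dot_invp // !mxE.
have s0 := sum_inv_gt0 hp; have pi0 := osimplex_pos hp i.
field.
by rewrite n0R !gt_eqF.
Qed.

Lemma piv_sum (p : vec) : osimplex p -> \sum_(i < n) piv ord0 i = 1.
Proof.
move=> hp; have := DER hp hp; rewrite subrr derive0 addr0 => ->.
apply: eq_bigr => i _; rewrite mulfK // gt_eqF //; exact: osimplex_pos.
Qed.

Lemma seg_mx (x y : vec) t i : (x + t *: (y - x)) ord0 i = x ord0 i + t * (y ord0 i - x ord0 i).
Proof. by rewrite !mxE. Qed.

Lemma INT (y : vec) : osimplex y ->
  phi y = \sum_(i < n) piv ord0 i * ln (y ord0 i) +
          (phi unif - \sum_(i < n) piv ord0 i * ln (unif ord0 i)).
Proof.
move=> hy.
have hu := unif_osimplex.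
set v := y - unif.
set vi := fun i => v ord0 i.
pose g := fun t : R => phi (unif + t *: v) -
   \sum_(i < n) piv ord0 i * ln (unif ord0 i + t * v ord0 i).
have Hd : forall t : R, 0 <= t <= 1 -> is_derive t (1:R) g
   ('D_v phi (unif + t *: v) -
    \sum_(i < n) piv ord0 i * ((unif ord0 i + t * v ord0 i)^-1 * v ord0 i)).
  move=> t ht.
  have hl : osimplex (unif + t *: v) by exact: osimplex_seg.
  have pos : forall i, 0 < unif ord0 i + t * v ord0 i.
    by move=> i; have := osimplex_pos hl i; rewrite !mxE.
  have d1 : derivable phi (unif + t *: v) v by apply: hder => //; exact: tangent_diff.
  move/derivable_line: d1 => d1.
  have H1 := derivableP d1.
  rewrite -D_line in H1.
  exact: (is_deriveB H1 (LNS piv pos)).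
have H0 : forall t : R, t \in `]0, 1[%R -> is_derive t (1:R) g 0.
  move=> t; rewrite in_itv /= => /andP[t0 t1].
  have ht : 0 <= t <= 1 by apply/andP; split; lra.
  have := Hd t ht.
  set D := 'D_v phi _; set L := \sum_(i < n) _.
  suff -> : D - L = 0 by [].
  have hl : osimplex (unif + t *: v) by exact: osimplex_seg.
  have ev : (1 - t) *: v = y - (unif + t *: v).
    by apply/rowP => i; rewrite !mxE; ring.
  have [_ Ds] := D_scale (1 - t) (hder hl (tangent_diff hu hy)).
  rewrite ev in Ds.
  have Dd := DER hl hy.
  have EL : (1 - t) * L = \sum_(i < n) piv ord0 i * y ord0 i / (unif + t *: v) ord0 i - 1.
    rewrite -[X in _ = _ - X](piv_sum hu) -sumrB mulr_sumr; apply: eq_bigr => i _.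
    have lE : (unif + t *: v) ord0 i = unif ord0 i + t * v ord0 i by rewrite !mxE.
    have vE : v ord0 i = y ord0 i - unif ord0 i by rewrite !mxE.
    have li := osimplex_pos hl i.
    rewrite lE vE in li *.
    field; by rewrite gt_eqF.
  have : (1 - t) * (D - L) = 0 by rewrite mulrBr EL -Ds; lra.
  move/eqP; rewrite mulf_eq0 => /orP[|/eqP //].
  by rewrite subr_eq0 => /eqP t1'; move: t1; rewrite -t1' ltxx.
have C : {within `[0, 1], continuous g}.
  apply: continuous_in_subspaceT => t.
  rewrite inE /= in_itv /= => ht.
  have [dg _] := Hd t ht.
  exact/differentiable_continuous/derivable1_diffP.
have [c _] := MVT_segment ler01 H0 C.
rewrite mul0r => /eqP; rewrite subr_eq0 => /eqP E.
have e1 : unif + 1 *: v = y by rewrite scale1r /v addrC subrK.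
have e0 : unif + 0 *: v = unif by rewrite scale0r addr0.
have s1 : \sum_(i < n) piv ord0 i * ln (unif ord0 i + 1 * v ord0 i) =
          \sum_(i < n) piv ord0 i * ln (y ord0 i).
  by apply: eq_bigr => i _; congr (_ * ln _); rewrite !mxE; ring.
have s0 : \sum_(i < n) piv ord0 i * ln (unif ord0 i + 0 * v ord0 i) =
          \sum_(i < n) piv ord0 i * ln (unif ord0 i).
  by apply: eq_bigr => i _; congr (_ * ln _); ring.
rewrite /g e1 e0 s1 s0 in E.
rewrite -E; ring.
Qed.

Lemma delta_row (i j : 'I_n) : (delta_mx 0 i : vec) ord0 j = (j == i)%:R.
Proof. by rewrite mxE eqxx. Qed.

Lemma uvecE (i j : 'I_n) : uvec i ord0 j = (j == i)%:R - (n%:R)^-1.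
Proof. by rewrite /uvec !mxE eqxx. Qed.

Lemma piv_ge0 (i : 'I_n) : 0 <= piv ord0 i.
Proof.
rewrite mxE divr_ge0 ?ler0n //.
set D := 'D_(uvec i) phi unif.
case: (lerP 0 (1 + D)) => // hD.
have Dn : D < -1 by lra.
have D0 : D != 0 by rewrite lt_eqF //; lra.
set s := - D^-1.
have s0 : 0 < s by rewrite /s oppr_gt0 invr_lt0; lra.
have s1 : s < 1.
  rewrite /s -(@ltr_pM2l _ (- D)); last by lra.
  by rewrite mulrN mulNr opprK divff // mulr1; lra.
have hy : osimplex (unif + s *: uvec i).
  apply: pos_osimplex => [j|].
    rewrite mxDE mxZE uvecE mxE.
    have ni : 0 < (n%:R : R)^-1 by rewrite invr_gt0 ltr0n.
    have ni1 : (n%:R : R)^-1 <= 1 by rewrite invf_le1 ?ltr0n // ler1n.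
    by case: (j == i) => /=; nra.
  by rewrite sum_line (osimplex_sum unif_osimplex) tangent_uvec mulr0 addr0.
have := Kf_D_gt0 hcon hder unif_osimplex hy.
have -> : unif + s *: uvec i - unif = s *: uvec i by rewrite addrC addKr.
have [_ ->] := D_scale s (hder unif_osimplex (tangent_uvec i)).
rewrite -/D /s mulNr mulVf //; lra.
Qed.

Hypothesis n2 : (2 <= n)%N.

Lemma piv_gt0 (i : 'I_n) : 0 < piv ord0 i.
Proof.
rewrite lt0r piv_ge0 andbT; apply/negP => /eqP p0.
set v := - uvec i.
have hv : tangent v by rewrite /v -scaleN1r; apply: tangentZ; exact: tangent_uvec.
have nR : (1 : R) < n%:R by rewrite ltr1n.
have ni : 0 < (n%:R : R)^-1 by rewrite invr_gt0 ltr0n.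
have ni1 : (n%:R : R)^-1 < 1 by rewrite invf_lt1 ?ltr0n.
have v0 : v != 0.
  apply/negP => /eqP v0; have := congr1 (fun w : vec => w ord0 i) v0.
  rewrite /v mxNE uvecE eqxx mxE /=; lra.
have := hreg unif_osimplex hv v0.
set C := phi unif - \sum_(i < n) piv ord0 i * ln (unif ord0 i).
rewrite (@aff_d2 _ _ (expR C / n%:R) (expR C / n%:R)) ?ltxx //.
have N1 := near_osimplex unif_osimplex hv.
near=> s.
have hs : osimplex (unif + s *: v) by near: s.
have s1 : `|s| < 1 by near: s; exact: (@nbhs0_lt R R^o 1 ltr01).
have s1' : 0 < 1 + s by move: s1; rewrite ltr_norml => /andP[? ?]; lra.
rewrite INT //.
have -> : \sum_(j < n) piv ord0 j * ln ((unif + s *: v) ord0 j) =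
          \sum_(j < n) piv ord0 j * ln ((1 + s) / n%:R).
  apply: eq_bigr => j _; have [->|ji] := eqVneq j i; first by rewrite p0 !mul0r.
  by congr (_ * ln _); rewrite mxDE mxZE /v mxNE uvecE (negbTE ji) mxE /=; ring.
rewrite -mulr_suml (piv_sum unif_osimplex) mul1r expRD lnK; first by field; rewrite n0R.
by rewrite posrE divr_gt0 // ltr0n.
Unshelve. all: by end_near. Qed.

End Main3.


Section Easy.
Variables (R : realType) (n : nat) (phi : 'rV[R]_n -> R).
Notation vec := 'rV[R]_n.
Hypothesis n0 : (0 < n)%N.
Variables (pi : vec) (c : R).
Hypothesis hpi : osimplex pi.
Hypothesis hphi : forall p : vec, osimplex p -> phi p = - cross_entropy pi p + c.

Lemma phiE (p : vec) : osimplex p -> phi p = \sum_(i < n) pi ord0 i * ln (p ord0 i) + c.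
Proof. by move=> hp; rewrite hphi // /cross_entropy opprK. Qed.

Lemma DD (p q : vec) : osimplex p -> osimplex q ->
  1 + 'D_(q - p) phi p = \sum_(i < n) pi ord0 i * q ord0 i / p ord0 i.
Proof.
move=> hp hq.
set v := q - p.
have hv : tangent v by exact: tangent_diff.
have pos : forall i, 0 < p ord0 i + 0 * v ord0 i.
  by move=> i; rewrite mul0r addr0; exact: osimplex_pos.
have H := is_deriveD (LNS pi pos) (@is_derive_cst R R R c 0 1).
rewrite addr0 in H.
rewrite D_line0 (@near_eq_derive R R R _ (fun t => \sum_(i < n) pi ord0 i * ln (p ord0 i + t * v ord0 i) + c)).
  case: H => _ ->.
  rewrite -[X in X + _](osimplex_sum hpi) -big_split /=; apply: eq_bigr => i _.
  have pi0 := osimplex_pos hp i.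
  rewrite /v !mxE mul0r addr0; field; by rewrite gt_eqF.
have N := near_osimplex hp hv.
near=> t.
have ht : osimplex (p + t *: v) by near: t.
rewrite phiE //; congr (_ + _); apply: eq_bigr => i _; by rewrite !mxE.
Unshelve. all: by end_near. Qed.

Let i0 : 'I_n := Ordinal n0.

Lemma S_gt0 (p q : vec) : osimplex p -> osimplex q ->
  0 < \sum_(i < n) pi ord0 i * q ord0 i / p ord0 i.
Proof.
move=> hp hq; rewrite (bigD1 i0) //=; apply: ltr_wpDr.
  apply: sumr_ge0 => j _; apply: divr_ge0; last exact/ltW/osimplex_pos.
  by apply: mulr_ge0; exact/ltW/osimplex_pos.
by apply: divr_gt0; [apply: mulr_gt0|]; exact: osimplex_pos.
Qed.

Lemma LD (p q : vec) : osimplex p -> osimplex q ->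
  logdiv phi q p = ln (\sum_(i < n) pi ord0 i * q ord0 i / p ord0 i) -
     \sum_(i < n) pi ord0 i * ln (q ord0 i / p ord0 i).
Proof.
move=> hp hq; rewrite /logdiv /dirder DD // !phiE //.
congr (_ - _).
transitivity (\sum_(i < n) pi ord0 i * ln (q ord0 i) - \sum_(i < n) pi ord0 i * ln (p ord0 i)).
  by ring.
rewrite -sumrB; apply: eq_bigr => i _.
rewrite ln_div ?posrE ?osimplex_pos //; ring.
Qed.

Lemma easy_inv (p q h : vec) : osimplex p -> osimplex q -> osimplex h ->
  logdiv phi (perturb q h) (perturb p h) = logdiv phi q p.
Proof.
move=> hp hq hh.
have hhp := osimplex_pos hh.
have hp' := perturb_osimplex n0 hp hhp; have hq' := perturb_osimplex n0 hq hhp.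
have dp := dot_gt0 n0 hp hhp; have dq := dot_gt0 n0 hq hhp.
set r := dot p h / dot q h.
have r0 : 0 < r by exact: divr_gt0.
have E : forall i, perturb q h ord0 i / perturb p h ord0 i = q ord0 i / p ord0 i * r.
  move=> i; rewrite !perturbE /r.
  have := osimplex_pos hp i; have := osimplex_pos hq i; have := hhp i => h0 q0 p0.
  field; by rewrite !gt_eqF.
rewrite !LD //.
have -> : \sum_(i < n) pi ord0 i * perturb q h ord0 i / perturb p h ord0 i =
          r * \sum_(i < n) pi ord0 i * q ord0 i / p ord0 i.
  rewrite mulr_sumr; apply: eq_bigr => i _; rewrite -mulrA E; ring.
have -> : \sum_(i < n) pi ord0 i * ln (perturb q h ord0 i / perturb p h ord0 i) =
          \sum_(i < n) pi ord0 i * ln (q ord0 i / p ord0 i) + ln r.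
  rewrite -[X in _ = _ + X]mul1r -(osimplex_sum hpi) mulr_suml -big_split /=.
  apply: eq_bigr => i _; rewrite E lnM ?posrE //; first ring.
  by apply: divr_gt0; exact: osimplex_pos.
rewrite lnM ?posrE //; first ring.
exact: S_gt0.
Qed.

End Easy.

Local Close Scope classical_set_scope.
Unset Implicit Arguments. Set Strict Implicit. Set Printing Implicit Defensive.

Theorem mainTheorem14 (R : realType) (n : nat) (phi : 'rV[R]_n -> R) :
  (2 <= n)%N ->
  regular_exp_concave phi ->
  ((forall p q h : 'rV[R]_n, osimplex p -> osimplex q -> osimplex h ->
      logdiv phi (perturb q h) (perturb p h) = logdiv phi q p)
   <->
   (exists (pi : 'rV[R]_n) (c : R), osimplex pi /\
      forall p : 'rV[R]_n, osimplex p ->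
        phi p = - cross_entropy pi p + c)).
Proof.
move=> n2 [hcon [hC hreg]].
have n0 : (0 < n)%N by exact: ltnW.
have hder : forall p v, osimplex p -> tangent v -> derivable phi p v.
  by case: hC => _ [hd _].
split.
- move=> hinv.
  exists (piv phi), (phi (unif R n) - \sum_(i < n) piv phi ord0 i * ln (unif R n ord0 i)).
  split.
    apply: pos_osimplex; first exact: (piv_gt0 n0 hcon hder hinv hreg n2).
    exact: (piv_sum n0 hcon hder hinv hreg (@unif_osimplex _ _ n0)).
  move=> p hp; rewrite /cross_entropy opprK.
  exact: (INT n0 hcon hder hinv hreg hp).
- move=> [pi [c [hpi hphi]]] p q h hp hq hh.
  exact: (easy_inv n0 hpi hphi hp hq hh).
Qed.
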